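(* Let $H$ be a real Hilbert space, $C\subset H$ a nonempty closed convex set, and $A,F:H\to H$ operators. (a) Assume that the couple $(A,F)$ is $\gamma$-strongly monotone for some $\gamma>0$, and that $x^*$ is a solution of $\mathrm{GVI}(A,F,C)$. Then for all $f\in C$ and all $y\in H$, $$\langle Fy-f,\,Ay-Ax^*\rangle+\langle f-Fx^*,\,Ay\rangle\ \ge\ \gamma\|y-x^*\|^2 .$$ (b) Assume that the couple $(A,F)$ is monotone. Then $x^*\in H$ is a solution of $\mathrm{GVI}(A,F,C)$ if and only if $Fx^*\in C$ and $$\langle Ay-Ax^*,\,Fy-f\rangle+\langle Ay,\,f-Fx^*\rangle\ \ge\ 0\qquad\text{for all } y\in H,\ f\in C.$$
   Context: The general variational inequality $\mathrm{GVI}(A,F,C)$ is the problem: find $x^*\in H$ such that $Fx^*\in C$ and $\langle Ax^*,y-Fx^*\rangle\ge 0$ for all $y\in C$. A couple $(A,F)$ of operators $H\to H$ is called $\gamma$-strongly monotone ($\gamma>0$) if $\langle Ax-Ay,Fx-Fy\rangle\ge\gamma\|x-y\|^2$ for all $x,y\in H$, and monotone if $\langle Ax-Ay,Fx-Fy\rangle\ge 0$ for all $x,y\in H$. *)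

(* Defs.v *)
From HB Require Import structures.
From mathcomp Require Import all_boot all_order all_algebra.
From mathcomp Require Import all_classical all_reals all_analysis.
Set Implicit Arguments. Unset Strict Implicit. Unset Printing Implicit Defensive.
Import Order.TTheory GRing.Theory Num.Theory.
Import numFieldNormedType.Exports.
Local Open Scope classical_set_scope.
Local Open Scope ring_scope.

(* A real Hilbert space is modelled as a complete normed space H over a
   realType R together with a real inner product [ip] inducing its norm. *)
Definition is_inner_product (R : realType) (H : completeNormedModType R)
  (ip : H -> H -> R) : Prop :=
  [/\ (forall x y, ip x y = ip y x),
      (forall a x y z, ip (a *: x + y) z = a * ip x z + ip y z),
      (forall x, 0 <= ip x x),
      (forall x, ip x x = 0 -> x = 0)
    & (forall x, `|x| ^+ 2 = ip x x)].

Definition GVI_sol (R : realType) (H : completeNormedModType R) (ip : H -> H -> R)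
  (A F : H -> H) (C : set H) (xs : H) : Prop :=
  C (F xs) /\ forall y, C y -> 0 <= ip (A xs) (y - F xs).

Definition couple_strongly_monotone (R : realType) (H : completeNormedModType R)
  (ip : H -> H -> R) (A F : H -> H) (gamma : R) : Prop :=
  forall x y, gamma * `|x - y| ^+ 2 <= ip (A x - A y) (F x - F y).

Definition couple_monotone (R : realType) (H : completeNormedModType R)
  (ip : H -> H -> R) (A F : H -> H) : Prop :=
  forall x y, 0 <= ip (A x - A y) (F x - F y).

(* Main.v *)
Require Import Defs.
From HB Require Import structures.
From mathcomp Require Import all_boot all_order all_algebra.
From mathcomp Require Import all_classical all_reals all_analysis.
From mathcomp Require Import lra.
Import Order.TTheory GRing.Theory Num.Theory.
Import numFieldNormedType.Exports.
Local Open Scope classical_set_scope.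
Local Open Scope ring_scope.


Section Aux.
Variables (R : realType) (H : completeNormedModType R) (ip : H -> H -> R).
Hypothesis hip : is_inner_product ip.

Lemma ipD x y z : ip (x + y) z = ip x z + ip y z.
Proof. by case: hip => _ hl _ _ _; have := hl 1 x y z; rewrite scale1r mul1r. Qed.

Lemma ip0 z : ip 0 z = 0.
Proof.
have h := ipD 0 0 z; rewrite addr0 in h.
by have := congr1 (fun t => t - ip 0 z) h; rewrite subrr addrK => <-.
Qed.

Lemma ipN x z : ip (- x) z = - ip x z.
Proof.
have h := ipD x (- x) z; rewrite subrr ip0 in h.
by rewrite -[RHS]add0r h addrAC subrr add0r.
Qed.

Lemma ipB x y z : ip (x - y) z = ip x z - ip y z.
Proof. by rewrite ipD ipN. Qed.

Lemma ipC x y : ip x y = ip y x.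
Proof. by case: hip. Qed.
Lemma ipBr x y z : ip z (x - y) = ip z x - ip z y.
Proof. by rewrite ipC ipB !(ipC z). Qed.
End Aux.
Arguments ipBr {R H ip}.
Arguments ipC {R H ip}.
Arguments ipB {R H ip}.
Arguments ip0 {R H ip}.
Arguments ipD {R H ip}.
Arguments ipN {R H ip}.

Theorem lemma1p1 (R : realType) (H : completeNormedModType R)
  (ip : H -> H -> R) (C : set H) (A F : H -> H) :
  is_inner_product ip ->
  C !=set0 -> closed C -> convex_set C ->
  (forall (gamma : R) (xs : H), 0 < gamma ->
     couple_strongly_monotone ip A F gamma ->
     GVI_sol ip A F C xs ->
     forall f y, C f ->
       ip (F y - f) (A y - A xs) + ip (f - F xs) (A y) >= gamma * `|y - xs| ^+ 2)
  /\
  (couple_monotone ip A F ->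
     forall xs : H,
       GVI_sol ip A F C xs <->
       (C (F xs) /\ forall y f, C f ->
          ip (A y - A xs) (F y - f) + ip (A y) (f - F xs) >= 0)).
Proof.
move=> hip _ _ _.
have key : forall xs y f, ip (F y - f) (A y - A xs) + ip (f - F xs) (A y) =
   ip (A y - A xs) (F y - F xs) + ip (f - F xs) (A xs).
  move=> xs y f.
  rewrite (ipC hip (A y - A xs)).
  have -> : F y - f = (F y - F xs) - (f - F xs) by rewrite opprB addrA subrK.
  rewrite !(ipB hip) !(ipBr hip); lra.
split.
  move=> g xs g0 hsm [hC hs] f y Cf.
  rewrite key.
  have h1 := hs f Cf; have h2 := hsm y xs.
  rewrite (ipC hip (f - F xs)); lra.
move=> hm xs; split.
  move=> [hC hs]; split => // y f Cf.
  rewrite (ipC hip (A y - A xs)) (ipC hip (A y)) key.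
  have h1 := hs f Cf; have h2 := hm y xs.
  rewrite (ipC hip (f - F xs)); lra.
move=> [hC hs]; split => // f Cf.
have := hs xs f Cf; rewrite !subrr ip0 // add0r.
by [].
Qed.
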